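(* Let $X$ be a complex Banach space and $T:X\to X$ a uniformly rigid bounded linear operator. Then $\sigma(T)\subseteq\mathbb T=\{z\in\mathbb C:|z|=1\}$. In particular, $T$ is invertible.
   Context: $T$ is called uniformly rigid if there is an increasing sequence of positive integers $(k_n)$ with $\|T^{k_n}-I\|\to 0$. *)

(* Defs.v *)
From HB Require Import structures.
From mathcomp Require Import all_boot all_order all_algebra.
From mathcomp Require Import all_classical all_reals all_analysis.
From mathcomp.real_closed Require Import complex.
Set Implicit Arguments. Unset Strict Implicit. Unset Printing Implicit Defensive.
Import Order.TTheory GRing.Theory Num.Theory.
Import numFieldNormedType.Exports.
Local Open Scope ring_scope.
Local Open Scope classical_set_scope.

Section Ops.
Variables (R : realType) (X : completeNormedModType R[i]).

(* bounded (= continuous) linear operator on X *)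
Definition bounded_linear (T : X -> X) : Prop :=
  linear T /\ continuous T.

Definition invertible_op (A : X -> X) : Prop :=
  exists S : X -> X, bounded_linear S /\ S \o A = id /\ A \o S = id.

Definition spectrum (T : X -> X) : set R[i] :=
  [set lam | ~ invertible_op (fun x => T x - lam *: x)].

(* ||A|| <= e  unfolded:  forall x, |A x| <= e |x|.
   ||T^(k n) - I|| -> 0 as n -> oo. *)
Definition uniformly_rigid (T : X -> X) : Prop :=
  exists k : nat -> nat, (forall n, (k n < k n.+1)%N) /\ (0 < k 0)%N /\
    forall eps : R, 0 < eps ->
      exists N, forall n, (N <= n)%N -> forall x : X,
        `|iter (k n) T x - x| <= (eps%:C)%C * `|x|.
End Ops.

(* Main.v *)
Set Warnings "-all".
Require Import Defs.
From HB Require Import structures.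
From mathcomp Require Import all_boot all_order all_algebra.
From mathcomp Require Import all_classical all_reals all_analysis.
From mathcomp.real_closed Require Import complex.
From mathcomp.algebra_tactics Require Import ring.
Import Order.TTheory GRing.Theory Num.Theory.
Import numFieldNormedType.Exports.
Local Open Scope ring_scope.
Local Open Scope classical_set_scope.
Section Aux.
Variables (R : realType) (X : completeNormedModType R[i]).
Implicit Types (f g : X -> X) (x y : X) (a : R[i]).

Lemma archiC (z : R[i]) : 0 <= z -> exists n : nat, z < n%:R.
Proof.
move=> z0; have zr : z \is Num.real by exact: ger0_real.
exists (Num.Def.trunc (complex.Re z)).+1.
rewrite -(RRe_real zr).
have -> : ((Num.Def.trunc (complex.Re z)).+1%:R : R[i]) =
   ((Num.Def.trunc (complex.Re z)).+1%:R : R)%:C%C.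
  by rewrite rmorph_nat.
by rewrite ltcR truncnS_gt.
Qed.

Lemma fixpt f : (forall x y, `|f x - f y| <= 2^-1 * `|x - y|) ->
  exists p, f p = p.
Proof.
move=> fl.
pose q : R[i] := 2^-1.
have q0 : 0 <= q by rewrite /q invr_ge0.
have q2 : 2 * q = 1 by rewrite /q mulfV // pnatr_eq0.
pose u n := iter n f 0.
pose D := `|f 0|.
have D0 : 0 <= D by exact: normr_ge0.
have step n : `|u n.+1 - u n| <= q ^+ n * D.
  elim: n => [|n IH]; first by rewrite /u /= subr0 expr0 mul1r.
  rewrite /u !iterS -/(u n.+1) -/(u n).
  apply: (le_trans (fl _ _)); rewrite exprS -mulrA.
  by rewrite ler_wpM2l.
have dist n m : `|u n - u (n + m)%N| + 2 * q ^+ (n + m)%N * D <= 2 * q ^+ n * D.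
  elim: m => [|m IH]; first by rewrite addn0 subrr normr0 add0r.
  apply: le_trans IH; rewrite addnS.
  have e : 2 * q ^+ (n + m).+1 * D = q ^+ (n + m) * D.
    by rewrite exprS mulrA q2 mul1r.
  rewrite e.
  apply: (le_trans (lerD (ler_distD (u (n + m)) _ _) (lexx _))).
  rewrite -addrA lerD2l distrC.
  have -> : 2 * q ^+ (n + m) * D = q ^+ (n + m) * D + q ^+ (n + m) * D by ring.
  by rewrite lerD2r.
have cu : cvgn u.
  apply/cauchy_cvgP/cauchy_exP => eps eps0.
  have [N HN] := archiC (2 * D / eps) (divr_ge0 (mulr_ge0 (ler0n _ 2) D0) (ltW eps0)).
  exists (u N); exists N => // j /= Nj.
  rewrite -ball_normE /=.
  have -> : j = (N + (j - N))%N by rewrite subnKC.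
  apply: le_lt_trans (_ : 2 * q ^+ N * D < eps).
    apply: le_trans (dist N (j - N)%N).
    by rewrite lerDl !mulr_ge0 // ?exprn_ge0.
  have qN : q ^+ N = (2 ^+ N)^-1 by rewrite /q exprVn.
  rewrite qN mulrAC ltr_pdivrMr ?exprn_gt0 //.
  have : (N%:R : R[i]) <= 2 ^+ N.
    by rewrite -natrX ler_nat ltnW // ltn_expl.
  move: HN; rewrite ltr_pdivrMr // => HN HN2.
  apply: (lt_le_trans HN); rewrite mulrC ler_wpM2l //; exact: ltW.
pose p := limn u.
have up : u @ \oo --> p by [].
have fc : {for p, continuous f}.
  apply/cvgrPdist_lt => e e0; near=> z.
  apply: (le_lt_trans (fl _ _)).
  rewrite -ltr_pdivlMl ?invr_gt0 // invrK; near: z.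
  by apply: cvgr_dist_lt => //; rewrite mulr_gt0.
have h1 : (f \o u) @ \oo --> f p by apply: continuous_cvg.
have h2 : (fun n => u n.+1) @ \oo --> p by rewrite (cvg_shiftS u).
have h3 : (f \o u) @ \oo --> p.
  have -> : f \o u = (fun n => u n.+1) by apply/funext => n; rewrite /u /= ?iterS.
  exact: h2.
exists p; rewrite -(cvg_lim (@norm_hausdorff _ _) h1).
exact: (cvg_lim (@norm_hausdorff _ _) h3).
Unshelve. all: by end_near. Qed.

Lemma lin0 f : linear f -> f 0 = 0.
Proof.
move=> lf; have := lf 1 0 0; rewrite !scale1r addr0 => h.
by apply/(addrI (f 0)); rewrite addr0 -h.
Qed.

Lemma linD f : linear f -> forall x y, f (x + y) = f x + f y.
Proof. by move=> lf x y; have := lf 1 x y; rewrite !scale1r. Qed.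

Lemma linZ f : linear f -> forall a x, f (a *: x) = a *: f x.
Proof. by move=> lf a x; have := lf a x 0; rewrite !addr0 lin0 // addr0. Qed.

Lemma linN f : linear f -> forall x, f (- x) = - f x.
Proof. by move=> lf x; rewrite -scaleN1r linZ // scaleN1r. Qed.

Lemma linB f : linear f -> forall x y, f (x - y) = f x - f y.
Proof. by move=> lf x y; rewrite linD // linN. Qed.

Lemma bounded_cont f (M : R[i]) : linear f -> 0 < M ->
  (forall x, `|f x| <= M * `|x|) -> continuous f.
Proof.
move=> lf M0 fb x; apply/cvgrPdist_lt => e e0.
near=> z; rewrite -linB //; apply: (le_lt_trans (fb _)).
rewrite -ltr_pdivlMl //; near: z; apply: cvgr_dist_lt => //.
by rewrite mulrC divr_gt0.
Unshelve. all: by end_near. Qed.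

Lemma neumann (A : X -> X) (c : R[i]) : linear A -> c != 0 ->
  (forall x, 2 * `|A x| <= `|c| * `|x|) ->
  invertible_op (fun x => c *: x + A x).
Proof.
move=> lA c0 Ab.
set B := fun x => c *: x + A x.
have nc0 : 0 < `|c| by rewrite normr_gt0.
have lB : linear B.
  move=> a u v; rewrite /B (linD _ lA) (linZ _ lA) !scalerDr !scalerA mulrC.
  by rewrite -!addrA; congr (_ + _); rewrite addrCA.
have Binj x y : B x = B y -> x = y.
  move=> e; apply/eqP; rewrite -subr_eq0; apply/eqP.
  have e0 : B (x - y) = 0 by rewrite linB // e subrr.
  move: e0; set z := x - y => e0.
  have hz : c *: z = - A z by apply/eqP; rewrite -addr_eq0; apply/eqP.
  have h2 := Ab z.
  have hA : `|A z| = `|c| * `|z| by rewrite -normrZ hz normrN.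
  rewrite hA mulr2n mulrDl mul1r -{3}(addr0 (`|c| * `|z|)) lerD2l in h2.
  rewrite pmulr_rle0 // normr_le0 in h2.
  by apply/eqP.
have surj y : exists x, B x = y.
  pose g x := c^-1 *: (y - A x).
  have [p gp] : exists p, g p = p.
    apply: fixpt => u v; rewrite /g -scalerBr opprD addrA.
    rewrite [y - A u - y]addrC addrA [- y + y]addrC subrr add0r opprK addrC -(linB _ lA).
    rewrite normrZ normrV ?unitfE // mulrC ler_pdivrMr //.
    rewrite -(ler_pM2l (ltr0n _ 2)) !mulrA mulfV ?pnatr_eq0 // mul1r.
    by rewrite [X in _ <= X]mulrC distrC; apply: Ab.
  exists p; rewrite /B -{1}gp /g scalerA mulfV // scale1r.
  by rewrite subrK.
have [S BS] := choice surj.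
have SB x : S (B x) = x by apply: Binj; rewrite BS.
have lS : linear S.
  move=> a u v; apply: Binj; rewrite lB !BS //.
have Sb y : `|S y| <= 2 / `|c| * `|y|.
  set x := S y.
  have ey : y = c *: x + A x by rewrite -(BS y).
  have h1 : `|c| * `|x| <= `|y| + `|A x|.
    rewrite -normrZ; have -> : c *: x = y - A x by rewrite ey addrK.
    by rewrite -[`|A x|]normrN ler_normD.
  have h2 := Ab x.
  have h3 : `|c| * `|x| <= 2 * `|y|.
    have h4 : 2 * (`|c| * `|x|) <= 2 * `|y| + `|c| * `|x|.
      apply: (le_trans (_ : _ <= 2 * (`|y| + `|A x|))); first by rewrite ler_pM2l.
      by rewrite mulrDr lerD2l.
    have e2 : 2 * (`|c| * `|x|) = `|c| * `|x| + `|c| * `|x| by ring.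
    by rewrite e2 lerD2r in h4.
  by rewrite mulrAC ler_pdivlMr // mulrC.
exists S; split; first split => //.
  apply: (bounded_cont _ _ lS _ Sb).
  by rewrite divr_gt0.
by split; apply/funext => x /=; rewrite ?SB ?BS.
Qed.

Fixpoint Pk (T : X -> X) (lam : R[i]) (k : nat) (x : X) : X :=
  match k with 0 => 0 | k'.+1 => T (Pk T lam k' x) + lam ^+ k' *: x end.

Lemma scale_cont (c : R[i]) : continuous (fun x : X => c *: x).
Proof.
apply: (bounded_cont _ (`|c| + 1)).
- by move=> a u v; rewrite scalerDr !scalerA mulrC.
- by rewrite ltr_wpDl.
- by move=> x; rewrite normrZ ler_wpM2r // lerDl.
Qed.

Lemma Pk_bl T lam k : bounded_linear T -> bounded_linear (Pk T lam k).
Proof.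
move=> [lT cT]; elim: k => [|k [lP cP]] /=.
  split; first by move=> a u v; rewrite scaler0 addr0.
  by move=> x; exact: cvg_cst.
split.
  move=> a u v; rewrite (lP a u v) (linD _ lT) (linZ _ lT) !scalerDr !scalerA mulrC.
  by rewrite -!addrA; congr (_ + _); rewrite addrCA.
have -> : (fun x => T (Pk T lam k x) + lam ^+ k *: x) =
  (T \o Pk T lam k) + (fun x => lam ^+ k *: x) by apply/funext.
move=> x; apply: continuousD; last exact: scale_cont.
exact: continuous_comp (cP x) (cT _).
Qed.

Lemma Pk_left T lam k x : linear T ->
  T (Pk T lam k x) - lam *: Pk T lam k x = iter k T x - lam ^+ k *: x.
Proof.
move=> lT; elim: k => [|k IH] /=.
  by rewrite lin0 // scaler0 subr0 expr0 scale1r subrr.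
have e : iter k T x = T (Pk T lam k x) - lam *: Pk T lam k x + lam ^+ k *: x.
  by rewrite IH subrK.
rewrite e !(linD _ lT) ?(linN _ lT) !(linZ _ lT) exprS -scalerA scalerDr.
by rewrite opprD addrA [_ + lam ^+ k *: T x - _]addrAC.
Qed.

Lemma Pk_right T lam k x : linear T ->
  Pk T lam k (T x - lam *: x) = iter k T x - lam ^+ k *: x.
Proof.
move=> lT; elim: k => [|k IH] /=.
  by rewrite expr0 scale1r subrr.
rewrite IH !(linD _ lT) ?(linN _ lT) !(linZ _ lT) exprS.
rewrite scalerDr scalerN !scalerA [lam ^+ k * lam]mulrC.
by rewrite addrA subrK.
Qed.

Lemma poly_step T lam k : bounded_linear T ->
  invertible_op (fun x => iter k T x - lam ^+ k *: x) ->
  invertible_op (fun x => T x - lam *: x).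
Proof.
move=> bT [S [[lS cS] [SB BS]]].
have [lP cP] := Pk_bl T lam k bT.
have lT := bT.1.
have hB y : iter k T (S y) - lam ^+ k *: S y = y := congr1 (fun f => f y) BS.
have hS x : S (iter k T x - lam ^+ k *: x) = x := congr1 (fun f => f x) SB.
set M := fun x => T x - lam *: x.
have hR y : M (Pk T lam k (S y)) = y by rewrite /M Pk_left // hB.
have hL x : S (Pk T lam k (M x)) = x by rewrite /M Pk_right // hS.
exists (Pk T lam k \o S); split.
  split; first by move=> a u v /=; rewrite lS lP.
  by move=> x; exact: continuous_comp (cS x) (cP _).
split; apply/funext => x /=; last exact: hR.
have h := hL (Pk T lam k (S (M x))).
rewrite hR hL in h.
by rewrite -h.
Qed.

Lemma iter_lin (T : X -> X) m : linear T -> linear (iter m T).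
Proof.
move=> lT; elim: m => [|m IH] a u v //=.
by rewrite IH lT.
Qed.

Lemma dist_pow_r (r : R[i]) m : (0 < m)%N -> 0 <= r ->
  `|1 - r| <= `|1 - r ^+ m|.
Proof.
move=> m0 r0.
case/orP: (real_leVge (ger0_real r0) (real1 R[i])) => r1.
  have h := ler_iXnr m0 r0 r1.
  have h1 : r ^+ m <= 1 := le_trans h r1.
  rewrite (ger0_norm (x := 1 - r)) ?subr_ge0 // (ger0_norm (x := 1 - r ^+ m)) ?subr_ge0 //.
  by rewrite lerD2l lerN2.
have h := ler_eXnr m0 r1.
have h1 : 1 <= r ^+ m := le_trans r1 h.
rewrite (ler0_norm (x := 1 - r)) ?subr_le0 // (ler0_norm (x := 1 - r ^+ m)) ?subr_le0 //.
by rewrite !opprB lerD2r.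
Qed.

Lemma dist_pow (lam : R[i]) m : (0 < m)%N ->
  `|1 - `|lam| | <= `|1 - lam ^+ m|.
Proof.
move=> m0; apply: le_trans (ler_dist_dist _ _).
rewrite normr1 normrX; exact: dist_pow_r.
Qed.
End Aux.

Theorem proposition2p19 (R : realType) (X : completeNormedModType R[i])
  (T : X -> X) :
  bounded_linear T -> uniformly_rigid T ->
  (spectrum T `<=` [set z : R[i] | `|z| = 1]) /\ invertible_op T.
Proof.
move=> bT [k [kinc [k0 rig]]].
have kge n : (0 < k n)%N.
  elim: n => // n IH; exact: ltn_trans IH (kinc n).
have core lam : `|lam| <> 1 -> invertible_op (fun x => T x - lam *: x).
  move=> l1.
  set d := `|1 - `|lam| |.
  have d0 : 0 < d.
    rewrite normr_gt0 subr_eq0; apply/eqP => h; apply: l1; by rewrite -h.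
  have dr : (d / 2) \is Num.real by apply: ger0_real; rewrite divr_ge0 // ltW.
  set e := complex.Re (d / 2).
  have eE : (e%:C)%C = d / 2 by exact: RRe_real.
  have e0 : 0 < e by rewrite -ltcR eE divr_gt0.
  have [N HN] := rig e e0.
  set m := k N.
  apply: (@poly_step R X T lam m) => //.
  set c := 1 - lam ^+ m.
  have dc : d <= `|c| by apply: dist_pow; exact: kge.
  have -> : (fun x => iter m T x - lam ^+ m *: x) =
      (fun x => c *: x + (iter m T x - x)).
    apply/funext => x; rewrite /c scalerBl scale1r.
    by rewrite [RHS]addrC addrA subrK.
  apply: neumann.
  - move=> a u v; rewrite (@iter_lin R X T m bT.1) scalerBr opprD addrACA.
    by rewrite -addrA.
  - by rewrite -normr_gt0; apply: lt_le_trans dc.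
  - move=> x; have := HN N (leqnn N) x; rewrite eE => h.
    apply: le_trans (ler_wpM2r (normr_ge0 x) dc).
    rewrite -(ler_pM2l (ltr0n _ 2)) in h.
    have e2 : (2 : R[i]) * (d / 2 * `|x|) = d * `|x| by field.
    by rewrite e2 in h.
split.
  move=> lam sl; apply: contrapT => l1; apply: sl; exact: core.
have h := core 0; rewrite normr0 in h.
have -> : T = (fun x => T x - 0 *: x) by apply/funext => x; rewrite scale0r subr0.
by apply: h => /esym/eqP; rewrite oner_eq0.
Qed.
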